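(* Let $R$ be an integral domain. If $R$ is perinormal, then $R_W$ is perinormal for every multiplicative set $W \subseteq R$. Conversely, if $R_{\mathfrak{m}}$ is perinormal for every maximal ideal $\mathfrak{m}$ of $R$, then $R$ is perinormal.
   Context: All rings are commutative with identity; ''local'' means having a unique maximal ideal; an overring of a domain $R$ is a ring between $R$ and its fraction field. A ring extension $A \subseteq B$ satisfies going-down if whenever $\mathfrak{p} \subset \mathfrak{q}$ are primes of $A$ and $Q$ is a prime of $B$ with $Q \cap A = \mathfrak{q}$, there is a prime $P \subseteq Q$ of $B$ with $P \cap A = \mathfrak{p}$. A domain $R$ is perinormal if every local overring $S$ of $R$ such that $R \subseteq S$ satisfies going-down is a localization of $R$. *)

(* Defs.v *)
From HB Require Import structures.
From mathcomp Require Import all_boot all_order all_algebra.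
From mathcomp Require Export fraction.
Set Implicit Arguments. Unset Strict Implicit. Unset Printing Implicit Defensive.
Import Order.TTheory GRing.Theory Num.Theory.
Local Open Scope ring_scope.

(* Sets are Prop-valued predicates.  Subrings, ideals, primes are taken
   relative to an ambient commutative ring T. *)

Definition subsetP {T : Type} (A B : T -> Prop) := forall x, A x -> B x.

Section RingDefs.
Variable T : comNzRingType.

Definition is_subring (S : T -> Prop) :=
  [/\ S 0, S 1, (forall x y, S x -> S y -> S (x - y))
    & (forall x y, S x -> S y -> S (x * y))].

Definition is_ideal (S I : T -> Prop) :=
  [/\ subsetP I S, I 0, (forall x y, I x -> I y -> I (x + y))
    & (forall r x, S r -> I x -> I (r * x))].

Definition is_prime (S P : T -> Prop) :=
  [/\ is_ideal S P, ~ P 1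
    & forall x y, S x -> S y -> P (x * y) -> P x \/ P y].

Definition is_maximal (S M : T -> Prop) :=
  [/\ is_ideal S M, ~ M 1
    & forall I, is_ideal S I -> subsetP M I -> ~ I 1 -> subsetP I M].

Definition is_local (S : T -> Prop) :=
  exists M, is_maximal S M /\
    forall M', is_maximal S M' -> forall x, M' x <-> M x.

Definition going_down (A S : T -> Prop) :=
  forall p q : T -> Prop, is_prime A p -> is_prime A q -> subsetP p q ->
  forall Q : T -> Prop, is_prime S Q -> (forall x, A x -> (Q x <-> q x)) ->
  exists P : T -> Prop, [/\ is_prime S P, subsetP P Q
                         & forall x, A x -> (P x <-> p x)].

Definition mult_set (A W : T -> Prop) :=
  [/\ subsetP W A, W 1, ~ W 0 & forall x y, W x -> W y -> W (x * y)].

End RingDefs.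

Section FieldDefs.
Variable K : fieldType.

Definition frac_field_of (A : K -> Prop) (x : K) :=
  exists a b, [/\ A a, A b, b != 0 & x = a / b].

Definition is_overring (A S : K -> Prop) :=
  [/\ is_subring S, subsetP A S & subsetP S (frac_field_of A)].

Definition localization (A W : K -> Prop) (x : K) :=
  exists a w, [/\ A a, W w & x = a / w].

Definition is_localization_of (A S : K -> Prop) :=
  exists W, mult_set A W /\ forall x, S x <-> localization A W x.

(* A (a subring of the field K, hence a domain) is perinormal *)
Definition perinormal (A : K -> Prop) :=
  forall S, is_overring A S -> is_local S -> going_down A S ->
    is_localization_of A S.

End FieldDefs.

(* For a domain R: its canonical image in {fraction R}, and R_W there. *)
Definition dom_image (R : idomainType) (x : {fraction R}) : Prop :=
  exists r : R, x = FracField.tofrac r.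

Definition loc_dom (R : idomainType) (W : R -> Prop) (x : {fraction R}) : Prop :=
  exists a w : R, W w /\ x = FracField.tofrac a / FracField.tofrac w.

Definition perinormal_dom (R : idomainType) := perinormal (@dom_image R).

(* Main.v *)
Require Import Defs.
From HB Require Import structures.
From mathcomp Require Import all_boot all_order all_algebra.
From mathcomp Require Import fraction generic_quotient ring.
From mathcomp Require Import classical_sets.
From Stdlib Require Import Classical.
Import GRing.Theory.
Local Open Scope ring_scope.

Section Gen.
Variable T : comNzRingType.

Lemma max_exists (S I : T -> Prop) : is_ideal S I -> ~ I 1 ->
  exists M, is_maximal S M /\ Defs.subsetP I M.
Proof.
move=> [IS I0 IA IM] nI1.
pose P (A : T -> Prop) := [/\ ~ A 1, Defs.subsetP A S,
  (forall x y, A x -> A y -> A (x + y)), (forall r x, S r -> A x -> A (r * x))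
  & ((forall x, ~ A x) \/ Defs.subsetP I A)].
have [A [[nA1 AS AA AM Ae] Amax]] : exists A, P A /\ forall B, (A `<` B)%classic -> ~ P B.
  apply: Zorn_bigcup => F FP Ftot; split.
  - by case=> X FX X1; have [] := FP X FX; auto.
  - by move=> x [X FX Xx]; have [_ XS _ _ _] := FP X FX; exact: XS.
  - move=> x y [X FX Xx] [Y FY Yy].
    have [XY|YX] := Ftot X Y FX FY.
    + have [_ _ YA _ _] := FP Y FY; exists Y => //; apply: YA => //; exact: XY.
    + have [_ _ XA _ _] := FP X FX; exists X => //; apply: XA => //; exact: YX.
  - move=> r x Sr [X FX Xx]; have [_ _ _ XM _] := FP X FX.
    by exists X => //; apply: XM.
  - case: (classic (exists X, F X /\ Defs.subsetP I X)) => [[X [FX IX]]|nex].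
      by right=> x Ix; exists X => //; apply: IX.
    left=> x [X FX Xx]; have [_ _ _ _ [Xe|IX]] := FP X FX; first exact: (Xe x).
    by apply: nex; exists X.
have IA' : Defs.subsetP I A.
  case: Ae => // Ae; exfalso; apply: (Amax I).
    split; first by move=> x /Ae.
    by move=> H; apply: (Ae 0); apply: H.
  by split => //; right.
exists A; split => //; split => //.
  by split => //; apply: IA'.
move=> J [JS J0 JA JM] MJ nJ1 x Jx.
apply: NNPP => nAx; apply: (Amax J).
  by split => // H; apply: nAx; apply: H.
split => //; right => y Iy; apply: MJ; exact: IA'.
Qed.

Lemma local_unit (S : T -> Prop) : is_subring S -> is_local S ->
  exists M, is_maximal S M /\
    forall x, S x -> ~ M x -> exists y, S y /\ x * y = 1.
Proof.
move=> [S0 S1 SB SM] [M [hM Muniq]]; exists M; split => // x Sx nMx.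
apply: NNPP => nex.
have SD : forall a b, S a -> S b -> S (a + b).
  move=> a b Sa Sb; have := SB a (0 - b) Sa (SB 0 b S0 Sb).
  by rewrite sub0r opprK.
pose J z := exists s, S s /\ z = x * s.
have hJ : is_ideal S J.
  split.
  - by move=> z [s [Ss ->]]; apply: SM.
  - by exists 0; rewrite mulr0.
  - by move=> a b [s [Ss ->]] [t [St ->]]; exists (s + t); rewrite mulrDr; split => //; apply: SD.
  - by move=> r z Sr [s [Ss ->]]; exists (r * s); rewrite mulrCA; split => //; apply: SM.
have nJ1 : ~ J 1 by move=> [s [Ss e]]; apply: nex; exists s.
have [M' [hM' JM']] := @max_exists S J hJ nJ1.
apply: nMx; apply/(Muniq M' hM'); apply: JM'; exists 1; rewrite mulr1.
by split.
Qed.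

Lemma contract (A B P : T -> Prop) : Defs.subsetP B A -> B 0 ->
  (forall x y, B x -> B y -> B (x * y)) ->
  (forall x y, B x -> B y -> B (x + y)) ->
  is_prime A P -> is_prime B (fun x => B x /\ P x).
Proof.
move=> BA B0 BM BD [[PA P0 PD PM] nP1 Pp]; split.
- split; first by move=> x [].
  + by split.
  + by move=> x y [Bx Px] [By Py]; split; [apply: BD|apply: PD].
  + move=> r x Br [Bx Px]; split; last by apply: PM => //; apply: BA.
    exact: BM.
- by case.
- move=> x y Bx By [_ Pxy]; case: (Pp x y (BA _ Bx) (BA _ By) Pxy); tauto.
Qed.

End Gen.

Section Gen2.
Variable T : comNzRingType.

Lemma ideal_unit (S I : T -> Prop) (u v x : T) : is_ideal S I -> S u -> S v ->
  v * u = 1 -> (I x <-> I (u * x)).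
Proof.
move=> [_ _ _ IM] Su Sv vu; split; first exact: IM.
by move=> H; have := IM v _ Sv H; rewrite mulrA vu mul1r.
Qed.

Lemma max_mult (m : T -> Prop) : is_maximal (fun _ => True) m ->
  forall x y, ~ m x -> ~ m y -> ~ m (x * y).
Proof.
move=> [[_ m0 mD mM] nm1 mmax] x y nx ny mxy.
pose J z := exists m1 r, m m1 /\ z = m1 + x * r.
have hJ : is_ideal (fun _ => True) J.
  split => //.
  - by exists 0, 0; rewrite mulr0 addr0.
  - move=> a b [m1 [r [h1 ->]]] [m2 [s [h2 ->]]]; exists (m1 + m2), (r + s).
    by split; [apply: mD | rewrite mulrDr addrACA].
  - move=> c a _ [m1 [r [h1 ->]]]; exists (c * m1), (c * r).
    by split; [apply: mM | rewrite mulrDr mulrCA].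
have mJ : Defs.subsetP m J by move=> z mz; exists z, 0; rewrite mulr0 addr0.
case: (classic (J 1)) => [[m1 [r [h1 e]]]|nJ1]; last first.
  by apply: nx; apply: (mmax J hJ mJ nJ1); exists 0, 1; rewrite mulr1 add0r.
apply: ny; have -> : y = y * m1 + r * (x * y).
  by rewrite (mulrC r) (mulrC x) -mulrA -mulrDr -e mulr1.
apply: mD; apply: mM => //.
Qed.

End Gen2.

Lemma frac_repr (R : idomainType) (x : {fraction R}) :
  exists n d : R, d != 0 /\ x = FracField.tofrac n / FracField.tofrac d.
Proof.
elim/quotW: x => r.
exists (\n_r), (\d_r); split; first exact: denom_ratioP.
apply: (@mulIf _ (FracField.tofrac (\d_r))); first by rewrite tofrac_eq0 denom_ratioP.
rewrite mulfVK ?tofrac_eq0 ?denom_ratioP //.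
unlock FracField.tofrac.
rewrite -[_ * _]/(FracField.mul _ _) -FracField.pi_mul.
apply/eqmodP; rewrite /= FracField.equivfE /FracField.mulf /=.
rewrite !numden_Ratio ?mulf_neq0 ?oner_eq0 ?denom_ratioP //.
by rewrite !mulr1 mulrC.
Qed.

Arguments frac_repr {R}.

Lemma fsub_frac (F : fieldType) (a b w v : F) : w != 0 -> v != 0 ->
  a / w - b / v = (a * v - b * w) / (w * v).
Proof. move=> hw hv; field; by rewrite hw hv. Qed.
Lemma fadd_frac (F : fieldType) (a b w v : F) : w != 0 -> v != 0 ->
  a / w + b / v = (a * v + b * w) / (w * v).
Proof. move=> hw hv; field; by rewrite hw hv. Qed.
Lemma fmul_frac (F : fieldType) (a b w v : F) :
  a / w * (b / v) = (a * b) / (w * v).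
Proof. by rewrite invfM mulrACA. Qed.

Lemma subring_add (T : comNzRingType) (S : T -> Prop) x y :
  is_subring S -> S x -> S y -> S (x + y).
Proof.
move=> [S0 S1 SB SM] Sx Sy; have := SB x (0 - y) Sx (SB 0 y S0 Sy).
by rewrite sub0r opprK.
Qed.

Lemma fcross (F : fieldType) (x y z t : F) : y != 0 -> t != 0 ->
  x / y = z / t -> x * t = z * y.
Proof. by move=> hy ht e; rewrite -(mulfVK hy x) e mulrAC mulfVK. Qed.
Lemma finv2 (F : fieldType) (b1 b2 : F) : b1 != 0 -> b2 != 0 ->
  (b1 / b2)^-1 * b2^-1 = b1^-1.
Proof. move=> h1 h2; field; by rewrite h1 h2. Qed.
Lemma fdiv3 (F : fieldType) (a1 a2 b1 b2 : F) : a2 != 0 -> b1 != 0 -> b2 != 0 ->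
  a1 / a2 / (b1 / b2) = a1 * b2 / (a2 * b1).
Proof. move=> h1 h2 h3; field; by rewrite h1 h2 h3. Qed.

Section Frac.
Variable R : idomainType.
Local Notation K := {fraction R}.
Local Notation f := (@FracField.tofrac R).
Local Notation B := (@dom_image R).

Lemma fnz (a : R) : a != 0 -> f a != 0.
Proof. by rewrite tofrac_eq0. Qed.

Lemma B_sub : is_subring B.
Proof.
split.
- by exists 0; rewrite tofrac0.
- by exists 1; rewrite tofrac1.
- by move=> x y [a ->] [b ->]; exists (a - b); rewrite tofracB.
- by move=> x y [a ->] [b ->]; exists (a * b); rewrite tofracM.
Qed.

Lemma frac_all x : frac_field_of B x.
Proof.
have [n [d [dn ->]]] := frac_repr x.
by exists (f n), (f d); split => //; [exists n|exists d|exact: fnz].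
Qed.

Lemma loc_sub (W : R -> Prop) : mult_set (fun _ => True) W -> is_subring (loc_dom W).
Proof.
move=> [_ W1 nW0 WM].
have fW : forall w, W w -> f w != 0.
  by move=> w Ww; apply: fnz; apply/eqP => e; apply: nW0; rewrite -e.
split.
- by exists 0, 1; rewrite tofrac0 mul0r.
- by exists 1, 1; rewrite tofrac1 divr1.
- move=> x y [a [w [Ww ->]]] [b [v [Wv ->]]].
  exists (a * v - b * w), (w * v); split; first exact: WM.
  have hw := fW w Ww; have hv := fW v Wv.
  by rewrite tofracB !tofracM fsub_frac.
- move=> x y [a [w [Ww ->]]] [b [v [Wv ->]]].
  exists (a * b), (w * v); split; first exact: WM.
  have hw := fW w Ww; have hv := fW v Wv.
  by rewrite !tofracM fmul_frac.
Qed.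

Lemma B_loc (W : R -> Prop) : W 1 -> Defs.subsetP B (loc_dom W).
Proof. by move=> W1 x [a ->]; exists a, 1; rewrite tofrac1 divr1. Qed.

Arguments loc_sub {W}.
Arguments B_loc {W}.

Lemma frac_mono (A : K -> Prop) (x : K) : Defs.subsetP B A -> frac_field_of A x.
Proof.
move=> BA; have [a [b [Ba Bb bn e]]] := frac_all x.
by exists a, b; split => //; apply: BA.
Qed.

Lemma dir1 : perinormal B ->
  forall W : R -> Prop, mult_set (fun _ => True) W -> perinormal (loc_dom W).
Proof.
move=> hR W hW; have [_ W1 nW0 WM] := hW.
have fW : forall w, W w -> f w != 0.
  by move=> w Ww; apply: fnz; apply/eqP => e; apply: nW0; rewrite -e.
have [A0 A1 AB AM] := loc_sub hW.
have AD : forall x y, loc_dom W x -> loc_dom W y -> loc_dom W (x + y).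
  by move=> x y; apply: subring_add; apply: loc_sub.
have BA := B_loc W1.
have Ainv : forall w, W w -> loc_dom W (f w)^-1.
  by move=> w Ww; exists 1, w; rewrite tofrac1 mul1r.
move=> S [hS AS Sfrac] hloc hgd.
have [S0 S1 SB SM] := hS.
have BS : Defs.subsetP B S := fun x Bx => AS x (BA x Bx).
have gdB : going_down B S.
  move=> p q hp hq hpq Q hQ hQq.
  have [[pB p0 pD pM] np1 pP] := hp.
  have [[QS Q0 QD QM] nQ1 QP] := hQ.
  have Sinv : forall w, W w -> S (f w)^-1 by move=> w Ww; apply: AS; apply: Ainv.
  have nQw : forall w, W w -> ~ Q (f w).
    move=> w Ww Qw; apply: nQ1; have := QM _ _ (Sinv w Ww) Qw.
    by rewrite mulVf ?fW.
  have npw : forall w, W w -> ~ p (f w).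
    move=> w Ww pw; apply: (nQw w Ww); apply/(hQq _ (ex_intro _ w erefl)).
    exact: hpq.
  pose p' x := exists a w, [/\ W w, p (f a) & x = f a / f w].
  pose q' x := loc_dom W x /\ Q x.
  have hq' : is_prime (loc_dom W) q' := @contract _ S (loc_dom W) Q AS A0 AM AD hQ.
  have hp' : is_prime (loc_dom W) p'.
    split; [split| |].
    - by move=> x [a [w [Ww _ ->]]]; exists a, w.
    - by exists 0, 1; split; rewrite // ?tofrac0 ?mul0r.
    - move=> x y [a [w [Ww pa ->]]] [b [v [Wv pb ->]]].
      exists (a * v + b * w), (w * v); split; first exact: WM.
        rewrite tofracD !tofracM; apply: pD; rewrite mulrC; apply: pM => //.
        by exists v. by exists w.
      by rewrite tofracD !tofracM fadd_frac ?fW.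
    - move=> r x [c [u [Wu ->]]] [a [w [Ww pa ->]]].
      exists (c * a), (u * w); split; first exact: WM.
        by rewrite tofracM; apply: pM => //; exists c.
      by rewrite !tofracM fmul_frac.
    - move=> [a [w [Ww pa e]]].
      have e' : f a = f w by rewrite -[f a](mulfVK (fW w Ww)) -e mul1r.
      by apply: (npw w Ww); rewrite -e'.
    - move=> x y [a [w [Ww ->]]] [b [v [Wv ->]]] [c [u [Wu pc e]]].
      rewrite fmul_frac -!tofracM in e.
      have e' := @fcross _ _ _ _ _ (fW _ (WM _ _ Ww Wv)) (fW u Wu) e.
      have pfab : p (f (a * b) * f u).
        rewrite e' mulrC; apply: pM => //; by exists (w * v).
      have := pP _ _ (ex_intro _ (a * b) erefl) (ex_intro _ u erefl) pfab.
      case=> [pab|/npw]; last by case.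
      rewrite tofracM in pab.
      case: (pP _ _ (ex_intro _ a erefl) (ex_intro _ b erefl) pab) => [pa|pb].
        by left; exists a, w.
      by right; exists b, v.
  have hpq' : Defs.subsetP p' q'.
    move=> x [a [w [Ww pa ->]]]; split; first by exists a, w.
    rewrite mulrC; apply: QM; first exact: Sinv.
    apply/(hQq _ (ex_intro _ a erefl)); exact: hpq.
  have hQq' : forall x, loc_dom W x -> (Q x <-> q' x).
    by move=> x Ax; split => [Qx|[]].
  have [P [hP PQ Pp]] := hgd p' q' hp' hq' hpq' Q hQ hQq'.
  exists P; split => // x Bx; rewrite (Pp x (BA x Bx)).
  case: Bx => r ->; split.
  - move=> [a [w [Ww pa e]]].
    have e' : f a = f r * f w by rewrite e mulfVK ?fW.
    rewrite e' in pa.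
    by case: (pP _ _ (ex_intro _ r erefl) (ex_intro _ w erefl) pa) => // /npw.
  - by move=> pr; exists r, 1; split => //; rewrite tofrac1 divr1.
have hovB : is_overring B S by split => // x _; apply: frac_all.
have [V [[VB V1 nV0 VM] hSV]] := hR S hovB hloc gdB.
exists V; split; first by split => // x Vx; apply: BA; apply: VB.
move=> x; split.
- by move=> /hSV [a [v [Ba Vv ->]]]; exists a, v; split => //; apply: BA.
- move=> [a [v [Aa Vv ->]]]; apply: SM; first exact: AS.
  apply/hSV; exists 1, v; split => //; last by rewrite div1r.
  by exists 1; rewrite tofrac1.
Qed.

Lemma dir2 : (forall m : R -> Prop, is_maximal (fun _ => True) m ->
       perinormal (loc_dom (fun x => ~ m x))) -> perinormal B.
Proof.
move=> H S [hS BS _] hloc hgd.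
have [S0 S1 SB SM] := hS.
have [B0 B1 BB BM] := B_sub.
have BD : forall x y, B x -> B y -> B (x + y).
  by move=> x y; apply: subring_add; apply: B_sub.
have [M [hM Munit]] := @local_unit _ S hS hloc.
have [[MS M0 MD MM] nM1 Mmax] := hM.
pose p0 r := M (f r).
have hp0 : is_ideal (fun _ : R => True) p0.
  split => //; rewrite /p0.
  - by move=> x y hx hy; rewrite tofracD; apply: MD.
  - by move=> r x _ hx; rewrite tofracM; apply: MM => //; apply: BS; exists r.
have np01 : ~ p0 1 by rewrite /p0 tofrac1.
have [m [hm p0m]] := @max_exists R _ _ hp0 np01.
pose U x := ~ m x.
have hU : mult_set (fun _ => True) U.
  have [[_ m0 _ _] nm1 _] := hm.
  split => //; rewrite /U //; try (by move=> h; apply: (h m0)).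
  exact: (@max_mult _ m hm).
have [_ U1 nU0 UM] := hU.
have fU : forall u, U u -> f u != 0.
  by move=> u Uu; apply: fnz; apply/eqP => e; apply: nU0; rewrite -e.
have Sinv : forall u, U u -> S (f u)^-1.
  move=> u Uu; have Sfu : S (f u) by apply: BS; exists u.
  have nMu : ~ M (f u) by move=> h; apply: Uu; apply: p0m.
  have [y [Sy e]] := Munit _ Sfu nMu.
  by have -> : (f u)^-1 = y by rewrite -[y](mulKf (fU u Uu)) e mulr1.
have [A0 A1 AB AM] := loc_sub hU.
have BA := B_loc U1.
have AS : Defs.subsetP (loc_dom U) S.
  by move=> x [a [u [Uu ->]]]; apply: SM; [apply: BS; exists a | exact: Sinv].
have gdA : going_down (loc_dom U) S.
  move=> p' q' hp' hq' hpq' Q hQ hQq'.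
  have hp0' := @contract _ (loc_dom U) B p' BA B0 BM BD hp'.
  have hq0' := @contract _ (loc_dom U) B q' BA B0 BM BD hq'.
  have hpq0 : Defs.subsetP (fun x => B x /\ p' x) (fun x => B x /\ q' x).
    by move=> x [Bx px]; split => //; apply: hpq'.
  have hQq0 : forall x, B x -> (Q x <-> B x /\ q' x).
    by move=> x Bx; rewrite (hQq' x (BA x Bx)); tauto.
  have [P [hP PQ Pp]] := hgd _ _ hp0' hq0' hpq0 Q hQ hQq0.
  exists P; split => // x [a [u [Uu ->]]].
  have Sfu : S (f u) by apply: BS; exists u.
  have Afu : loc_dom U (f u) by apply: BA; exists u.
  have Afi : loc_dom U (f u)^-1 by exists 1, u; rewrite tofrac1 mul1r.
  have e : f u * (f a / f u) = f a by rewrite mulrC mulfVK ?fU.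
  have [hPi _ _] := hP; have [hpi _ _] := hp'.
  rewrite (@ideal_unit _ S P (f u) (f u)^-1 _ hPi Sfu (Sinv u Uu) (mulVf (fU u Uu))).
  rewrite (@ideal_unit _ (loc_dom U) p' (f u) (f u)^-1 _ hpi Afu Afi (mulVf (fU u Uu))).
  rewrite e (Pp (f a) (ex_intro _ a erefl)); split; first by case.
  by move=> h; split => //; exists a.
have hovA : is_overring (loc_dom U) S by split => // x _; apply: frac_mono.
have [V [[VA V1 nV0 VM] hSV]] := H m hm S hovA hloc gdA.
pose V2 (x : K) := [/\ B x, x != 0 & S x^-1].
exists V2; split.
  split.
  - by move=> x [].
  - by split; [exists 1; rewrite tofrac1 | exact: oner_neq0 | rewrite invr1].
  - by case=> _; rewrite eqxx.
  - move=> x y [[r ->] hx Sx] [[s ->] hy Sy]; split.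
    + by exists (r * s); rewrite tofracM.
    + exact: mulf_neq0.
    + by rewrite invfM; apply: SM.
move=> x; split.
- move=> /hSV [a [v [[a1 [a2 [Ua2 ->]]] Vv ->]]].
  have [b1 [b2 [Ub2 ev]]] := VA v Vv.
  have vnz : v != 0 by apply/eqP => e; apply: nV0; rewrite -e.
  have b1nz : f b1 != 0.
    by apply/eqP => e; move: vnz; rewrite ev e mul0r eqxx.
  have Sv : S v^-1.
    apply/hSV; exists 1, v; split => //; last by rewrite div1r.
  exists (f (a1 * b2)), (f (a2 * b1)); split.
  + by exists (a1 * b2).
  + split; first by exists (a2 * b1).
      by rewrite tofracM; apply: mulf_neq0 => //; apply: fU.
    rewrite tofracM invfM -(@finv2 _ _ (f b2) b1nz (fU _ Ub2)) -ev.
    by apply: (SM _ _ (Sinv _ Ua2)); apply: (SM) => //; exact: Sinv.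
  + by rewrite ev !tofracM fdiv3 // fU.
- move=> [a [v [Ba [_ _ Sv] ->]]]; apply: SM => //; exact: BS.
Qed.

End Frac.

Theorem proposition2p5 (R : idomainType) :
  (perinormal_dom R ->
     forall W : R -> Prop, mult_set (fun _ => True) W -> perinormal (loc_dom W))
  /\
  ((forall m : R -> Prop, is_maximal (fun _ => True) m ->
       perinormal (loc_dom (fun x => ~ m x))) ->
     perinormal_dom R).
Proof.
split; [exact: (@dir1 R) | exact: (@dir2 R)].
Qed.
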